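(* For all $s,s_1,s_2\in\mathcal S$ the link velocities satisfy the reciprocity relation $$\vec\beta(s,s_2,s_1)=-\,\vec\beta(s,s_1,s_2)$$ in $T_s\mathcal S$.
   Context: $V$ is a 4-dimensional real vector space with a symmetric non-degenerate bilinear form $\eta$ of signature $(-,+,+,+)$; $\mathcal S$ is one fixed connected component of $\{v\in V:\eta(v,v)=-1\}$; $T_s\mathcal S:=\{u\in V:\eta(u,s)=0\}$. With $(u\otimes v)(w):=\eta(v,w)u$, for $s\in\mathcal S$ and $\vec\beta\in T_s\mathcal S$ with $\beta^2=\eta(\vec\beta,\vec\beta)<1$, $\beta>0$, $\vec n=\vec\beta/\beta$, $\gamma=(1-\beta^2)^{-1/2}$, the boost relative to $s$ is $B(s,\vec\beta)=\mathrm{id}_V+(\gamma-1)(-s\otimes s+\vec n\otimes\vec n)+\beta\gamma(s\otimes\vec n-\vec n\otimes s)$, $B(s,0)=\mathrm{id}_V$. The link velocity $\vec\beta(s,s_1,s_2)$ of $s_2$ against $s_1$ relative to $s$ is the unique $\vec\beta\in T_s\mathcal S$ of $\eta$-norm $<1$ with $B(s,\vec\beta)s_1=s_2$. *)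

(* Defs.v *)
From HB Require Import structures.
From mathcomp Require Import all_boot all_order all_algebra.
From mathcomp Require Import all_classical all_reals all_analysis.
Set Implicit Arguments. Unset Strict Implicit. Unset Printing Implicit Defensive.
Import Order.TTheory GRing.Theory Num.Theory.
Import numFieldNormedType.Exports.
Local Open Scope ring_scope.
Local Open Scope classical_set_scope.

(* V is modelled as 'rV[R]_4 (every 4-dim real vector space is linearly
   isomorphic to it, with its canonical topology); the bilinear form eta is
   given by its Gram matrix G: eta u v = u G v^T. *)
Section Minkowski.
Variable R : realType.
Notation V := 'rV[R]_4.

Definition eta (G : 'M[R]_4) (u v : V) : R := (u *m G *m v^T) 0 0.

Definition minkowski_diag : 'M[R]_4 :=
  diag_mx (\row_(i < 4) (if i == 0%N :> nat then -1 else 1)).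

(* symmetric, non-degenerate, signature (-,+,+,+): there is a basis
   (rows of an invertible P) in which the Gram matrix is diag(-1,1,1,1). *)
Definition lorentzian (G : 'M[R]_4) : Prop :=
  G^T = G /\ G \in unitmx /\
  exists P : 'M[R]_4, P \in unitmx /\ P *m G *m P^T = minkowski_diag.

Definition hyperboloid (G : 'M[R]_4) : set V := [set v | eta G v v = -1].

Definition is_sheet (G : 'M[R]_4) (S : set V) : Prop :=
  exists s0, hyperboloid G s0 /\ S = connected_component (hyperboloid G) s0.

Definition tangent (G : 'M[R]_4) (s : V) : set V := [set u | eta G u s = 0].

(* (u ⊗ v)(w) := eta(v,w) u ; boost B(s, beta) applied to w *)
Definition boost (G : 'M[R]_4) (s b : V) (w : V) : V :=
  if b == 0 then w else
  let bt := Num.sqrt (eta G b b) in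
  let n := bt^-1 *: b in
  let g := Num.sqrt ((1 - bt ^+ 2)^-1) in
  w + (g - 1) *: (- (eta G s w *: s) + eta G n w *: n)
    + (bt * g) *: (eta G n w *: s - eta G s w *: n).

Definition is_link_velocity (G : 'M[R]_4) (s s1 s2 b : V) : Prop :=
  tangent G s b /\ eta G b b < 1 /\ boost G s b s1 = s2.

Definition link_velocity (G : 'M[R]_4) (s s1 s2 : V) : V :=
  xget 0 [set b | is_link_velocity G s s1 s2 b].

End Minkowski.

(* Main.v *)
Require Import Defs.
From HB Require Import structures.
From mathcomp Require Import all_boot all_order all_algebra.
From mathcomp Require Import all_classical all_reals all_analysis.
From mathcomp Require Import ring lra.
Import Order.TTheory GRing.Theory Num.Theory.
Import numFieldNormedType.Exports.
Local Open Scope ring_scope.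
Local Open Scope classical_set_scope.

Local Notation ee := Defs.eta.
Section Aux.
Variable R : realType.
Implicit Types (G : 'M[R]_4) (u v w : 'rV[R]_4).

Lemma etaDl G u v w : ee G (u + v) w = ee G u w + ee G v w.
Proof. by rewrite /Defs.eta !mulmxDl mxE. Qed.
Lemma etaZl G k u w : ee G (k *: u) w = k * ee G u w.
Proof. by rewrite /Defs.eta -!scalemxAl mxE. Qed.
Lemma etaNl G u w : ee G (- u) w = - ee G u w.
Proof. by rewrite -scaleN1r etaZl mulN1r. Qed.
Lemma etaDr G u v w : ee G w (u + v) = ee G w u + ee G w v.
Proof. by rewrite /Defs.eta linearD /= !mulmxDr mxE. Qed.
Lemma etaZr G k u w : ee G w (k *: u) = k * ee G w u.
Proof. by rewrite /Defs.eta linearZ /= -!scalemxAr mxE. Qed.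
Lemma etaNr G u w : ee G w (- u) = - ee G w u.
Proof. by rewrite -scaleN1r etaZr mulN1r. Qed.
Lemma etaC G u v : G^T = G -> ee G u v = ee G v u.
Proof.
move=> hG; rewrite /Defs.eta.
transitivity ((u *m G *m v^T)^T 0 0); first by rewrite [RHS]mxE.
by rewrite !trmx_mul trmxK hG mulmxA.
Qed.
Lemma eta0l G w : ee G 0 w = 0.
Proof. by rewrite /Defs.eta !mul0mx mxE. Qed.
Lemma eta0r G w : ee G w 0 = 0.
Proof. by rewrite /Defs.eta trmx0 mulmx0 mxE. Qed.

Lemma mink_form (x y : 'rV[R]_4) :
  (x *m minkowski_diag R *m y^T) 0 0 =
  - (x 0 0 * y 0 0) + x 0 1 * y 0 1 + x 0 2%:R * y 0 2%:R + x 0 3%:R * y 0 3%:R.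
Proof.
rewrite /minkowski_diag mul_mx_diag !mxE !big_ord_recl big_ord0 !mxE /=.
have e1 : (lift ord0 ord0 : 'I_4) = 1 by apply/val_inj.
have e2 : (lift ord0 (lift ord0 ord0) : 'I_4) = 2%:R by apply/val_inj.
have e3 : (lift ord0 (lift ord0 (lift ord0 ord0)) : 'I_4) = 3%:R by apply/val_inj.
rewrite e1 e2 e3; ring.
Qed.

Lemma arith4 (s0 s1 s2 s3 u0 u1 u2 u3 : R) :
  - (s0 * s0) + s1 * s1 + s2 * s2 + s3 * s3 = -1 ->
  - (u0 * s0) + u1 * s1 + u2 * s2 + u3 * s3 = 0 ->
  (0 <= - (u0 * u0) + u1 * u1 + u2 * u2 + u3 * u3) /\
  (- (u0 * u0) + u1 * u1 + u2 * u2 + u3 * u3 = 0 ->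
     [/\ u0 = 0, u1 = 0, u2 = 0 & u3 = 0]).
Proof.
move=> h1 h2.
set Q := - (u0 * u0) + u1 * u1 + u2 * u2 + u3 * u3.
have e1 : s0 * u0 = u1 * s1 + u2 * s2 + u3 * s3 by lra.
have e2 : s0 ^+ 2 = 1 + s1 ^+ 2 + s2 ^+ 2 + s3 ^+ 2 by rewrite !expr2; lra.
have key : s0 ^+ 2 * Q = (u1 ^+ 2 + u2 ^+ 2 + u3 ^+ 2) + (u1 * s2 - u2 * s1) ^+ 2
   + (u1 * s3 - u3 * s1) ^+ 2 + (u2 * s3 - u3 * s2) ^+ 2.
  have -> : s0 ^+ 2 * Q = s0 ^+ 2 * (u1 ^+ 2 + u2 ^+ 2 + u3 ^+ 2) - (s0 * u0) ^+ 2.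
    by rewrite /Q; ring.
  by rewrite e1 e2; ring.
have hs0 : 1 <= s0 ^+ 2 by rewrite e2; nra.
have hR : 0 <= (u1 ^+ 2 + u2 ^+ 2 + u3 ^+ 2) + (u1 * s2 - u2 * s1) ^+ 2
   + (u1 * s3 - u3 * s1) ^+ 2 + (u2 * s3 - u3 * s2) ^+ 2 by do ![apply: addr_ge0 | exact: sqr_ge0].
have hQ : 0 <= Q by nra.
split => // hQ0.
have q1 := sqr_ge0 u1; have q2 := sqr_ge0 u2; have q3 := sqr_ge0 u3.
have l1 := sqr_ge0 (u1 * s2 - u2 * s1).
have l2 := sqr_ge0 (u1 * s3 - u3 * s1).
have l3 := sqr_ge0 (u2 * s3 - u3 * s2).
move: key; rewrite hQ0 mulr0 => key.
have hu1' : u1 = 0 by apply/eqP; rewrite -sqrf_eq0; apply/eqP; lra.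
have hu2' : u2 = 0 by apply/eqP; rewrite -sqrf_eq0; apply/eqP; lra.
have hu3' : u3 = 0 by apply/eqP; rewrite -sqrf_eq0; apply/eqP; lra.
split => //.
have : s0 * u0 = 0 by rewrite e1 hu1' hu2' hu3'; ring.
move/eqP; rewrite mulf_eq0 => /orP [/eqP hs|/eqP //].
by move: hs0; rewrite hs expr0n /= ler10.
Qed.

Lemma lor_pos G s : lorentzian G -> ee G s s = -1 ->
  (forall u, ee G u s = 0 -> 0 <= ee G u u) /\ (forall u, ee G u s = 0 -> ee G u u = 0 -> u = 0).
Proof.
case=> hGs [hGu [P [hPu hPG]]] hs.
set Q := invmx P.
have hGe : G = Q *m minkowski_diag R *m Q^T.
  rewrite -hPG /Q !mulmxA mulVmx // mul1mx -mulmxA -trmx_mul mulVmx //.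
  by rewrite trmx1 mulmx1.
have hE : forall u v, ee G u v = ((u *m Q) *m minkowski_diag R *m (v *m Q)^T) 0 0.
  by move=> u v; rewrite /Defs.eta hGe trmx_mul !mulmxA.
move: hs; rewrite hE mink_form => hs.
split.
  move=> u; rewrite !hE !mink_form => hu.
  by case: (arith4 _ _ _ _ _ _ _ _ hs hu).
move=> u; rewrite !hE !mink_form => hu hu0.
case: (arith4 _ _ _ _ _ _ _ _ hs hu) => _ /(_ hu0) [x0 x1 x2 x3].
have hx : u *m Q = 0.
  apply/rowP => i; rewrite [RHS]mxE.
  case: i => [[|[|[|[|//]]]] hi].
  - by rewrite -x0; congr (_ _ _); apply/val_inj.
  - by rewrite -x1; congr (_ _ _); apply/val_inj.
  - by rewrite -x2; congr (_ _ _); apply/val_inj.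
  - by rewrite -x3; congr (_ _ _); apply/val_inj.
by rewrite -(mulmxKV hPu u) -/Q hx mul0mx.
Qed.

Definition bt G (b : 'rV[R]_4) := Num.sqrt (ee G b b).
Definition gam G (b : 'rV[R]_4) := Num.sqrt ((1 - bt G b ^+ 2)^-1).
Definition nv G (b : 'rV[R]_4) := (bt G b)^-1 *: b.

Lemma boostE G s b x : b != 0 ->
  boost G s b x = x
   + (- (gam G b - 1) * ee G s x + bt G b * gam G b * ee G (nv G b) x) *: s
   + ((gam G b - 1) * ee G (nv G b) x - bt G b * gam G b * ee G s x) *: nv G b.
Proof.
move=> hb; rewrite /boost (negbTE hb) /= /gam /nv /bt.
by apply/rowP => i; rewrite !mxE; ring.
Qed.

Lemma boost_bt0 G s b x : bt G b = 0 -> boost G s b x = x.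
Proof.
move=> h; rewrite /boost; case: eqP => // _ /=.
rewrite -/(bt G b) h expr0n /= subr0 invr1 sqrtr1 subrr mul0r !scale0r !addr0.
done.
Qed.

Lemma btN G b : bt G (- b) = bt G b.
Proof. by rewrite /bt etaNl etaNr opprK. Qed.
Lemma gamN G b : gam G (- b) = gam G b.
Proof. by rewrite /gam btN. Qed.
Lemma nvN G b : nv G (- b) = - nv G b.
Proof. by rewrite /nv btN scalerN. Qed.

Lemma bt_facts G b : bt G b != 0 -> ee G b b < 1 ->
  [/\ 0 < bt G b, bt G b < 1, bt G b ^+ 2 = ee G b b, 0 < gam G b
    & (bt G b * gam G b) ^+ 2 = gam G b ^+ 2 - 1].
Proof.
move=> h0 h1.
have hbt : 0 < bt G b by rewrite lt_neqAle eq_sym h0 sqrtr_ge0.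
have hbb : 0 < ee G b b by rewrite -sqrtr_gt0.
have e2 : bt G b ^+ 2 = ee G b b by rewrite sqr_sqrtr // ltW.
have hlt : bt G b ^+ 2 < 1 by rewrite e2.
have hpos : 0 < 1 - bt G b ^+ 2 by rewrite subr_gt0.
have hg : 0 < gam G b by rewrite /gam sqrtr_gt0 invr_gt0.
have g2 : gam G b ^+ 2 = (1 - bt G b ^+ 2)^-1 by rewrite /gam sqr_sqrtr // ltW // invr_gt0.
split => //.
- by move: hlt; rewrite expr2 => hlt; nra.
- rewrite exprMn g2; field; by rewrite lt0r_neq0.
Qed.

Lemma boost_inv G s b x : G^T = G -> ee G s s = -1 -> ee G b s = 0 ->
  ee G b b < 1 -> boost G s (- b) (boost G s b x) = x.
Proof.
move=> hG hss hbs hbb.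
have [h0|h0] := eqVneq (bt G b) 0.
  by rewrite !boost_bt0 // btN.
have hb : b != 0.
  by apply: contraNneq h0 => ->; rewrite /bt eta0l sqrtr0.
have [hbt hbt1 e2 hg hH] := bt_facts _ _ h0 hbb.
rewrite boostE ?oppr_eq0 // btN gamN nvN boostE //.
set n := nv G b.
have hns : ee G n s = 0 by rewrite /n /nv etaZl hbs mulr0.
have hsn : ee G s n = 0 by rewrite etaC.
have hnn : ee G n n = 1.
  by rewrite /n /nv etaZl etaZr -e2; field.
clearbody n.
rewrite !(etaDr, etaZr, etaNl, etaNr) hss hsn hnn hns.
set g := gam G b; set t := bt G b; set A := ee G s x; set P := ee G n x.
transitivity (x + (A * ((t*g)^+2 - g^+2 + 1)) *: s
                + (P * (g^+2 - 1 - (t*g)^+2)) *: n).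
  by apply/rowP => i; rewrite !mxE; ring.
rewrite hH (_ : g ^+ 2 - 1 - g ^+ 2 + 1 = 0); last by ring.
by rewrite subrr !mulr0 !scale0r !addr0.
Qed.

Definition lvF G (s s1 s2 : 'rV[R]_4) : 'rV[R]_4 :=
  let w := s2 - s1 + ee G s (s2 - s1) *: s in
  let m := (- ee G s s1 - ee G s s2)^-1 *: w in
  (2 / (1 + ee G m m)) *: m.

Lemma lv_unique G s s1 s2 b : G^T = G -> ee G s s = -1 -> ee G s1 s1 = -1 ->
  (forall u, ee G u s = 0 -> 0 <= ee G u u) ->
  (forall u, ee G u s = 0 -> ee G u u = 0 -> u = 0) ->
  ee G b s = 0 -> ee G b b < 1 -> boost G s b s1 = s2 -> b = lvF G s s1 s2.
Proof.
move=> hG hss hs1 hpos hdef hbs hbb hB.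
have [hb0|hb] := eqVneq b 0.
  move: hB; rewrite hb0 /boost eqxx => <-.
  by rewrite /lvF /= subrr eta0r scale0r addr0 !scaler0.
have h0 : bt G b != 0.
  apply/negP => /eqP h; move: hb; apply/negP; rewrite negbK; apply/eqP.
  apply: hdef => //; apply/eqP; rewrite eq_le hpos // andbT -sqrtr_eq0.
  by rewrite -/(bt G b) h.
have [hbt hbt1 e2 hg hH] := bt_facts _ _ h0 hbb.
have hbn : b = bt G b *: nv G b by rewrite /nv scalerA mulfV // scale1r.
move: hB; rewrite boostE // => hB.
set n := nv G b in hB hbn.
have hns : ee G n s = 0 by rewrite /n /nv etaZl hbs mulr0.
have hsn : ee G s n = 0 by rewrite etaC.
have hnn : ee G n n = 1.
  by rewrite /n /nv etaZl etaZr -e2; field.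
clearbody n.
set g := gam G b in hB hH hg; set t := bt G b in hB hH hbt hbt1 hbn.
set A := ee G s s1 in hB; set P := ee G n s1 in hB.
set c1 := (- (g - 1) * A + t * g * P) in hB.
set c2 := ((g - 1) * P - t * g * A) in hB.
have hs1s : ee G s1 s = A by rewrite etaC.
have hs1n : ee G s1 n = P by rewrite etaC.
have hw : s2 - s1 + ee G s (s2 - s1) *: s = c2 *: n.
  rewrite -hB !(etaDr, etaZr, etaNr) hss hsn -/A.
  by apply/rowP => i; rewrite !mxE; ring.
have hL : - ee G s s1 - ee G s s2 = c1 - 2 * A.
  rewrite -hB !(etaDr, etaZr, etaNr) hss hsn -/A; ring.
have hCS : P ^+ 2 <= A ^+ 2 - 1.
  have hv : ee G (s1 + A *: s - P *: n) s = 0.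
    by rewrite !(etaDl, etaZl, etaNl) hs1s hss hns; ring.
  have := hpos _ hv.
  rewrite !(etaDl, etaZl, etaNl, etaDr, etaZr, etaNr).
  rewrite hs1 hs1s hs1n hss hsn hns hnn -/A -/P => h.
  rewrite !expr2; lra.
have hL0 : c1 - 2 * A != 0.
  apply/eqP => hL0.
  have e : (g + 1) * A = t * g * P by move: hL0; rewrite /c1 => hL0; lra.
  have e' : ((g + 1) * A) ^+ 2 = (t * g * P) ^+ 2 by rewrite e.
  move: e' hCS; rewrite !expr2 => e' hCS'.
  have ht2 : 0 <= 1 - t * t by nra.
  have h2 : 0 <= (1 - t * t) * (g * g * (P * P)).
    by apply: mulr_ge0 => //; apply: mulr_ge0; [apply: mulr_ge0; exact: ltW|nra].
  have h3 : 0 <= g * g * (A * A - 1 - P * P).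
    by apply: mulr_ge0; [apply: mulr_ge0; exact: ltW|lra].
  have h4 : 0 < g * g by apply: mulr_gt0.
  have h5 : 0 <= (2 * g + 1) * (A * A).
    by apply: mulr_ge0; [lra|nra].
  clear -e' h2 h3 h4 h5; nra.
rewrite /lvF /= hw hL.
rewrite !etaZl !etaZr hnn hbn !scalerA.
congr (_ *: n).
have hg1 : 1 + g != 0 by rewrite lt0r_neq0 // addr_gt0.
have hc2 : c2 * (1 + g) = t * g * (c1 - 2 * A).
  transitivity (t * g * (c1 - 2 * A) + P * (g ^+ 2 - 1 - (t * g) ^+ 2)).
    by rewrite /c2 /c1; ring.
  by rewrite hH subrr mulr0 addr0.
have htau : (c1 - 2 * A)^-1 * c2 = t * g / (1 + g).
  rewrite -[c2](mulfK hg1) hc2; field; by rewrite hL0 hg1.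
have hc2' : c2 = t * g / (1 + g) * (c1 - 2 * A).
  by rewrite -htau mulrC mulrA mulfV // mul1r.
move: hL0; rewrite hc2'; set L := c1 - 2 * A => hL0.
have h1 : 1 + t * g / (1 + g) * (t * g / (1 + g)) = 2 * g / (1 + g).
  transitivity (((1 + g) ^+ 2 + (t * g) ^+ 2) / (1 + g) ^+ 2).
    by field; rewrite hg1.
  by rewrite hH; field.
rewrite (_ : 1 + L^-1 * (t * g / (1 + g) * L * (L^-1 * (t * g / (1 + g) * L * 1)))
  = 1 + t * g / (1 + g) * (t * g / (1 + g))); last by field; rewrite hg1 hL0.
rewrite h1; field.
by rewrite hL0 hg1 lt0r_neq0.
Qed.
End Aux.

Lemma lv_swap (R : realType) (G : 'M[R]_4) s a c b : G^T = G -> ee G s s = -1 ->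
  is_link_velocity G s a c b -> is_link_velocity G s c a (- b).
Proof.
move=> hG hss [hbs [hbb hB]]; split; [|split].
- by rewrite /tangent /= etaNl hbs oppr0.
- by rewrite etaNl etaNr opprK.
- by rewrite -hB (boost_inv _ _ _ _ _ hG hss hbs hbb).
Qed.

Theorem mainTheorem5 (R : realType) (G : 'M[R]_4) (S : set 'rV[R]_4)
  (hG : lorentzian G) (hS : is_sheet G S) (s s1 s2 : 'rV[R]_4) :
  S s -> S s1 -> S s2 ->
  link_velocity G s s2 s1 = - link_velocity G s s1 s2.
Proof.
move=> hs hs1 hs2.
have hG0 : G^T = G by case: hG.
have hyp : forall x, S x -> ee G x x = -1.
  by case: hS => s0 [_ ->] x hx; exact: (connected_component_sub hx).
have [hpos hdef] := lor_pos _ _ _ hG (hyp s hs).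
have uniq : forall a c b, S a -> is_link_velocity G s a c b -> b = lvF R G s a c.
  move=> a c b ha [hbs [hbb hB]].
  exact: (lv_unique _ _ _ _ _ _ hG0 (hyp s hs) (hyp a ha) hpos hdef hbs hbb hB).
rewrite /link_velocity.
case: (pselect (exists b, is_link_velocity G s s1 s2 b)) => [[b hb]|hno].
  have hb' := lv_swap _ _ _ _ _ _ hG0 (hyp s hs) hb.
  rewrite (xget_unique 0 (P := [set b | is_link_velocity G s s1 s2 b]) hb); last first.
    by move=> y hy; rewrite (uniq _ _ _ hs1 hy) (uniq _ _ _ hs1 hb).
  rewrite (xget_unique 0 (P := [set b | is_link_velocity G s s2 s1 b]) hb') //.
  by move=> y hy; rewrite (uniq _ _ _ hs2 hy) (uniq _ _ _ hs2 hb').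
rewrite !xgetPN ?oppr0 //.
- by move=> x hx; apply: hno; exists x.
- move=> x hx; apply: hno; exists (- x).
  exact: lv_swap _ _ _ _ _ _ hG0 (hyp s hs) hx.
Qed.
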